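(* Consider the data-selling model described in the context, with network $G$ on $n$ buyers and cost $\gamma>0$. Suppose $G$ is not a disjoint union of complete graphs (this includes the case that $G$ is not complete). For $z_0>0$ define: - $z^o(z_0)=\sqrt{\alpha(G)/\gamma}-z_0$, the precision of the seller-optimal contract; - $z^*(z_0)$, the precision of the socially efficient contract, i.e. the positive solution $z$ of $$\sum_{i\in N}\frac{n_i+1}{(z_0+(n_i+1)z)^2}=\gamma.$$ Then there exists $\bar z>0$ such that $z^*(z_0)<z^o(z_0)$ for all $z_0\in(0,\bar z)$.
   Context: $N=\{1,\dots,n\}$ is the set of buyers and $G$ is an undirected simple network on $N$. $n_i$ denotes the degree (number of neighbors) of buyer $i$ in $G$. $\alpha(G)$ is the independence number of $G$, the largest size of a set of nodes no two of which are adjacent. A graph is a disjoint union of complete graphs if each of its connected components is a complete graph. Setting: the state is $\theta\sim N(0,1/z_0)$. A seller sells a common-precision signal $\theta+\varepsilon_i$, with $\varepsilon_i\sim N(0,1/z)$, to a target set of buyers at marginal cost $\gamma z$. Buyers share signals with their network neighbors and have quadratic loss $-(a_i-\theta)^2$. In this setting the seller-optimal precision is $z^o$ and the welfare-maximizing precision is $z^*$, as defined in the claim. *)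

(* Defs.v *)
From mathcomp Require Import all_boot all_order all_algebra.
Set Implicit Arguments. Unset Strict Implicit. Unset Printing Implicit Defensive.
Import Order.TTheory GRing.Theory Num.Theory.

Definition simple_graph n (e : rel 'I_n) : Prop :=
  symmetric e /\ irreflexive e.

Definition degree n (e : rel 'I_n) (i : 'I_n) : nat := #|[set j | e i j]|.

Definition independent n (e : rel 'I_n) (S : {set 'I_n}) : bool :=
  [forall i in S, forall j in S, ~~ e i j].

Definition indep_number n (e : rel 'I_n) : nat :=
  \max_(S : {set 'I_n} | independent e S) #|S|.

(* G is a disjoint union of complete graphs: every connected component is
   complete, i.e. any two distinct nodes in the same component are adjacent. *)
Definition disjoint_union_of_cliques n (e : rel 'I_n) : Prop :=
  forall i j : 'I_n, i != j -> connect e i j -> e i j.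

Local Open Scope ring_scope.

Definition welfare_foc (R : realFieldType) n (e : rel 'I_n) (z0 z : R) : R :=
  \sum_(i < n) ((degree e i).+1%:R / (z0 + (degree e i).+1%:R * z) ^+ 2).

Definition z_seller (R : rcfType) n (e : rel 'I_n) (gamma z0 : R) : R :=
  Num.sqrt ((indep_number e)%:R / gamma) - z0.

(* Main.v *)
Require Import Defs.
From mathcomp Require Import all_boot all_order all_algebra.
From mathcomp Require Import ring lra.
Import Order.TTheory GRing.Theory Num.Theory.
Set Implicit Arguments. Unset Strict Implicit. Unset Printing Implicit Defensive.
Local Open Scope ring_scope.

Definition dU n (e : rel 'I_n) (U : {set 'I_n}) (i : 'I_n) : nat :=
  #|[set j in U | e i j]|.
Definition SU (R : realFieldType) n (e : rel 'I_n) (U : {set 'I_n}) : R :=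
  \sum_(i in U) ((dU e U i).+1%:R)^-1.
Definition P3 n (e : rel 'I_n) (U : {set 'I_n}) : Prop :=
  exists a b c, [/\ a \in U, b \in U, c \in U & [/\ e a b, e b c, a != c & ~~ e a c]].

Lemma inv_le (R : realFieldType) (a b : nat) : (a <= b)%N ->
  ((b.+1)%:R : R)^-1 <= (a.+1%:R)^-1.
Proof. by move=> h; rewrite lef_pV2 ?posrE ?ltr0Sn // ler_nat ltnS. Qed.

Lemma inv_lt (R : realFieldType) (a b : nat) : (a < b)%N ->
  ((b.+1)%:R : R)^-1 < (a.+1%:R)^-1.
Proof. by move=> h; rewrite ltf_pV2 ?posrE ?ltr0Sn // ltr_nat ltnS. Qed.

Lemma invn_mul (R : realFieldType) (m : nat) : ((m.+1%:R : R)^-1) *+ m.+1 = 1.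
Proof. by rewrite -(mulr_natr (m.+1%:R^-1)) mulVf // pnatr_eq0. Qed.

Lemma sum_lt (R : realFieldType) n (A : {set 'I_n}) (F G : 'I_n -> R) k :
  k \in A -> (forall i, i \in A -> F i <= G i) -> F k < G k ->
  \sum_(i in A) F i < \sum_(i in A) G i.
Proof.
move=> kA hle hlt; rewrite (bigD1 k) // [X in _ < X](bigD1 k) //=.
apply: ltr_leD => //; apply: ler_sum => i /andP[iA _]; exact: hle.
Qed.

Lemma caro_wei (R : realFieldType) n (e : rel 'I_n) : simple_graph e ->
  forall U : {set 'I_n}, exists I : {set 'I_n},
    [/\ I \subset U, independent e I, SU R e U <= #|I|%:R &
        (P3 e U -> SU R e U < #|I|%:R)].
Proof.
move=> [esym eirr] U.
have [k Hk] : exists k, (#|U| <= k)%N by exists #|U|.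
elim: k U Hk => [|k IH] U HU.
  move: HU; rewrite leqn0 cards_eq0 => /eqP ->.
  exists set0; split; rewrite ?sub0set //.
  - by apply/forallP => i; rewrite inE.
  - by rewrite /SU big_set0 cards0.
  - by move=> [a [b [c [] ]]]; rewrite inE.
case: (set_0Vmem U) => [->|[v0 Hv0]].
  exists set0; split; rewrite ?sub0set //.
  - by apply/forallP => i; rewrite inE.
  - by rewrite /SU big_set0 cards0.
  - by move=> [a [b [c [] ]]]; rewrite inE.
case: (arg_minnP (dU e U) Hv0) => v Hv Hmin.
have {Hv}HvU : v \in U by [].
have {}Hmin : forall j, j \in U -> (dU e U v <= dU e U j)%N by [].
rewrite -/(SU R e U).
have HvB : v \in v |: [set j in U | e v j] by rewrite setU11.
set N := [set j in U | e v j].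
set B := v |: N.
set Up := [set j in U | (j != v) && ~~ e v j].
have HvN : v \notin N by rewrite inE eirr andbF.
have cardB : #|B| = (dU e U v).+1 by rewrite cardsU1 HvN.
have BsubU : B \subset U.
  by apply/subsetP => j; rewrite !inE => /orP[/eqP ->|/andP[]].
have UpE : Up = U :\: B.
  by apply/setP => j; rewrite !inE; case: (j \in U); rewrite ?andbF ?andbT ?negb_or.
have UpU : Up \subset U by rewrite UpE subsetDl.
have vUp : v \notin Up by rewrite inE eqxx andbF.
have cUp : (#|Up| <= k)%N.
  have : Up \subset U :\ v.
    by apply/subsetP => j; rewrite !inE => /andP[-> /andP[-> _]].
  move/subset_leq_card; move: HU; rewrite (cardsD1 v U) HvU /=.
  move=> h1 h2; rewrite -ltnS; exact: (leq_ltn_trans h2 h1).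
have [I' [I'sub I'ind I'le I'lt]] := IH Up cUp.
have vI' : v \notin I' by apply/negP => /(subsetP I'sub); apply/negP.
have [main1 main2] : SU R e U <= #|I'|%:R + 1 /\ (P3 e U -> SU R e U < #|I'|%:R + 1).
  have -> : SU R e U = \sum_(i in B) ((dU e U i).+1%:R : R)^-1 +
                       \sum_(i in Up) ((dU e U i).+1%:R : R)^-1.
    by rewrite /SU (big_setID B) /= (setIidPr BsubU) -UpE.
  have hX : \sum_(i in B) ((dU e U i).+1%:R : R)^-1 <= 1.
    apply: le_trans (ler_sum _ (fun i iB => inv_le R (Hmin i (subsetP BsubU i iB)))) _.
    by rewrite sumr_const cardB invn_mul.
  have subd : forall i, i \in Up -> (dU e Up i <= dU e U i)%N.
    move=> i iUp; apply: subset_leq_card; apply/subsetP => j.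
    rewrite inE => /andP[jUp eij]; by rewrite inE (subsetP UpU _ jUp) eij.
  have hY : \sum_(i in Up) ((dU e U i).+1%:R : R)^-1 <= SU R e Up.
    by apply: ler_sum => i iUp; apply: inv_le; apply: subd.
  split; first by apply: le_trans (lerD hX (le_trans hY I'le)) _; rewrite addrC.
  move=> [a [b [c [aU bU cU [eab ebc ac nac]]]]].
  case: (boolP [&& a \in Up, b \in Up & c \in Up]) => [/and3P[aP bP cP]|Hnot].
    have := I'lt (ex_intro _ a (ex_intro _ b (ex_intro _ c (And4 aP bP cP (And4 eab ebc ac nac))))).
    by move=> h; apply: lt_le_trans (ler_ltD hX (le_lt_trans hY h)) _; rewrite addrC.
  case: (boolP [exists u, (u \in N) && (dU e U v < dU e U u)%N]) => [/existsP[u /andP[uN ltu]]|no1].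
    suff : \sum_(i in B) ((dU e U i).+1%:R : R)^-1 < 1.
      by move=> h; apply: lt_le_trans (ltr_leD h (le_trans hY I'le)) _; rewrite addrC.
    apply: lt_le_trans (sum_lt (k := u) _ (fun i iB => inv_le R (Hmin i (subsetP BsubU i iB))) (inv_lt R ltu)) _.
      by rewrite /B setU1r.
    by rewrite sumr_const cardB invn_mul.
  case: (boolP [exists u, exists w, [&& u \in N, w \in Up & e u w]]) => [/existsP[u /existsP[w /and3P[uN wUp euw]]]|no2].
    suff : \sum_(i in Up) ((dU e U i).+1%:R : R)^-1 < SU R e Up.
      by move=> h; apply: lt_le_trans (ler_ltD hX (lt_le_trans h I'le)) _; rewrite addrC.
    apply: (sum_lt (k := w)) => //.
      by move=> i iUp; apply: inv_le; apply: subd.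
    apply: inv_lt; apply: proper_card; apply/properP; split.
      apply/subsetP => j; rewrite inE => /andP[jUp eij]; by rewrite inE (subsetP UpU _ jUp) eij.
    exists u.
      by move: uN; rewrite !inE (esym w u) euw andbT => /andP[].
    by move: uN; rewrite !inE => /andP[_ ->]; rewrite !andbF.
  exfalso.
  have no1' : forall u, u \in N -> (dU e U u <= dU e U v)%N.
    move=> u uN; rewrite leqNgt; apply/negP => h; move/negP: no1; apply; apply/existsP; exists u; by rewrite uN h.
  have no2' : forall u w, u \in N -> w \in Up -> ~~ e u w.
    by move=> u w uN wUp; move/existsPn: no2 => /(_ u) /existsPn /(_ w); rewrite uN wUp.
  have inB : forall x, x \in U -> x \notin Up -> x \in B.
    by move=> x xU; rewrite UpE inE xU andbT negbK.
  have clos : forall x y, x \in B -> y \in U -> e x y -> y \in B.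
    move=> x y; rewrite /B in_setU1 => /orP[/eqP ->|xN] yU exy.
      by rewrite in_setU1 inE yU exy orbT.
    apply: inB => //; apply/negP => yUp; by move: (no2' _ _ xN yUp); rewrite exy.
  have cliq : forall x y, x \in B -> y \in B -> x != y -> e x y.
    move=> x y xB yB xy; move: (xB); rewrite /B in_setU1 => /orP[/eqP xv|xN].
      by move: yB xy; rewrite xv in_setU1 eq_sym => /orP[->//|]; rewrite inE => /andP[].
    have xU : x \in U by move: xN; rewrite inE => /andP[].
    have sub : [set j in U | e x j] \subset B :\ x.
      apply/subsetP => j; rewrite inE => /andP[jU exj].
      rewrite in_setD1 (clos x j xB jU exj) andbT; apply/eqP => jx.
      by move: exj; rewrite jx eirr.
    have : [set j in U | e x j] == B :\ x.
      rewrite eqEcard sub /=.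
      have := cardsD1 x B; rewrite xB cardB add1n => -[<-].
      exact: Hmin.
    move/eqP => eqA.
    have : y \in B :\ x by rewrite in_setD1 yB eq_sym xy.
    by rewrite -eqA inE => /andP[].
  have [aB cB] : a \in B /\ c \in B.
    move: Hnot; rewrite !negb_and => /orP[/(inB _ aU) aB|/orP[/(inB _ bU) bB|/(inB _ cU) cB]].
    - have bB := clos _ _ aB bU eab; by split => //; exact: (clos _ _ bB cU ebc).
    - by split; [apply: (clos _ _ bB aU); rewrite esym|exact: (clos _ _ bB cU ebc)].
    - have bB : b \in B by apply: (clos _ _ cB bU); rewrite esym.
      by split => //; apply: (clos _ _ bB aU); rewrite esym.
  by move: nac; rewrite (cliq _ _ aB cB ac).
exists (v |: I'); split.
- apply/subsetP => j; rewrite in_setU1 => /orP[/eqP ->//|/(subsetP I'sub)].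
  by apply/subsetP.
- apply/forallP => i; apply/implyP; rewrite in_setU1 => Hi.
  apply/forallP => j; apply/implyP; rewrite in_setU1 => Hj.
  case/orP: Hi => [/eqP ->|Hi]; case/orP: Hj => [/eqP ->|Hj].
  + by rewrite eirr.
  + by move: (subsetP I'sub _ Hj); rewrite inE => /andP[_ /andP[]].
  + by rewrite esym; move: (subsetP I'sub _ Hi); rewrite inE => /andP[_ /andP[]].
  + by move/forallP: I'ind => /(_ i) /implyP /(_ Hi) /forallP /(_ j) /implyP /(_ Hj).
- by rewrite cardsU1 vI' add1n -natr1.
- by rewrite cardsU1 vI' add1n -natr1.
Qed.

Lemma no_p3_cliques n (e : rel 'I_n) :
  (forall a b c, e a b -> e b c -> a != c -> e a c) -> disjoint_union_of_cliques e.
Proof.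
move=> H i j ij /connectP [p pth jE]; subst j.
have gen : forall p x, path e x p -> (i = x \/ e i x) -> i = last x p \/ e i (last x p).
  elim=> [|y q IHq] x //= /andP[exy pq] hx; apply: IHq => //.
  case: hx => [->|eix]; first by right.
  case: (eqVneq i y) => [->|iy]; first by left.
  by right; apply: H eix exy iy.
case: (gen p i pth (or_introl erefl)) => // hl.
by move/eqP: ij => /(_ hl).
Qed.

Theorem theorem2 (R : rcfType) (n : nat) (e : rel 'I_n) (gamma : R) :
  simple_graph e ->
  0 < gamma ->
  ~ disjoint_union_of_cliques e ->
  exists2 zbar : R, 0 < zbar &
    forall z0 : R, 0 < z0 -> z0 < zbar ->
    forall zstar : R, 0 < zstar -> welfare_foc e z0 zstar = gamma ->
      zstar < z_seller e gamma z0.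
Proof.
move=> Hs Hg Hnd.
have P3T : P3 e setT.
  case: (boolP [exists a, exists b, exists c, [&& e a b, e b c, a != c & ~~ e a c]]).
    move=> /existsP[a /existsP[b /existsP[c /and4P[h1 h2 h3 h4]]]].
    by exists a, b, c; rewrite !inE.
  move=> hn; exfalso; apply: Hnd; apply: no_p3_cliques => a b c h1 h2 h3.
  case: (boolP (e a c)) => // h4; exfalso; move/negP: hn; apply; apply/existsP; exists a; apply/existsP; exists b.
  by apply/existsP; exists c; rewrite h1 h2 h3 h4.
have [I [_ Iind _ Ilt]] := caro_wei R Hs setT.
have {}Ilt := Ilt P3T.
set S := \sum_(i < n) ((degree e i).+1%:R : R)^-1.
have SE : SU R e setT = S.
  rewrite /SU /S; apply: eq_big => [i|i _]; first by rewrite inE.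
  have E : [set j in [set: 'I_n] | e i j] = [set j | e i j] by apply/setP => j; rewrite !inE.
  by rewrite /dU /degree E.
have Ia : (#|I| <= indep_number e)%N.
  by rewrite /indep_number; apply: (@leq_bigmax_cond _ (independent e) (fun T : {set 'I_n} => #|T|)).
have Sa : S < (indep_number e)%:R.
  by rewrite -SE; apply: lt_le_trans Ilt _; rewrite ler_nat.
have S0 : 0 <= S by apply: sumr_ge0 => i _; rewrite invr_ge0 ler0n.
set a := Num.sqrt ((indep_number e)%:R / gamma).
set s := Num.sqrt (S / gamma).
have sa : s < a.
  rewrite ltr_sqrt; first by rewrite ltr_pM2r ?invr_gt0.
  by rewrite divr_gt0 // (le_lt_trans S0 Sa).
exists (a - s); first by rewrite subr_gt0.
move=> z0 z0p z0lt zs zsp Hw.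
have key : gamma <= S / zs ^+ 2.
  rewrite -Hw /welfare_foc /S mulr_suml; apply: ler_sum => i _.
  set d : R := (degree e i).+1%:R.
  have dp : 0 < d by rewrite ltr0Sn.
  have -> : d^-1 / zs ^+ 2 = d / (d * zs) ^+ 2.
    by field; rewrite gt_eqF //= addrC natr1 pnatr_eq0.
  rewrite ler_pM2l // lef_pV2 ?posrE ?exprn_gt0 ?mulr_gt0 ?addr_gt0 //.
  rewrite ler_pXn2r ?nnegrE ?mulr_ge0 ?addr_ge0 ?ltW //.
  all: try by rewrite mulr_gt0.
  all: try lra.
have zs2 : zs ^+ 2 <= S / gamma.
  rewrite ler_pdivlMr // mulrC -ler_pdivlMr ?exprn_gt0 //.
have zss : zs <= s.
  by rewrite -(ger0_norm (ltW zsp)) -sqrtr_sqr ler_sqrt // divr_ge0 // ltW.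
rewrite /z_seller -/a; lra.
Qed.
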